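(* Let $M$ be a module over the Laurent polynomial ring $\mathbb{Z}[t^{\pm 1}]$, equipped with the binary operation $a * b = ta + (1-t)b$ (the Alexander quandle structure on $M$). Then $(M,* )$ is a Rump right quasigroup if and only if $(1-t)^{2}m = 0$ for every $m \in M$.
   Context: A magma $(X,\cdot)$ is a right quasigroup if every right translation $y \mapsto yx$ is a bijection of $X$. A Rump right quasigroup (cycle set) is a right quasigroup satisfying the identity $(zx)(yx) = (zy)(xy)$ for all $x,y,z \in X$. *)

(* Defs.v *)
From HB Require Import structures.
From mathcomp Require Import all_boot all_order all_algebra.
Set Implicit Arguments. Unset Strict Implicit. Unset Printing Implicit Defensive.
Import GRing.Theory.
Local Open Scope ring_scope.

(* A module over the Laurent polynomial ring Z[t, t^-1] is encoded as an
   abelian group M (zmodType) together with the action of t, an additive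
   bijection t : M -> M (the action of t^-1 being its inverse). *)

Definition right_quasigroup (X : Type) (op : X -> X -> X) : Prop :=
  forall x : X, bijective (fun y => op y x).

Definition rump_right_quasigroup (X : Type) (op : X -> X -> X) : Prop :=
  right_quasigroup op /\
  forall x y z : X, op (op z x) (op y x) = op (op z y) (op x y).

Definition alexander_op (M : zmodType) (t : M -> M) (a b : M) : M :=
  t a + (b - t b).

Definition one_minus_t (M : zmodType) (t : M -> M) (m : M) : M := m - t m.

(* Main.v *)
Require Import Defs.
From HB Require Import structures.
From mathcomp Require Import all_boot all_order all_algebra.
Local Open Scope ring_scope.
Import GRing.Theory.

Theorem mainTheorem1 (M : zmodType) (t : {additive M -> M}) (ht : bijective t) :
  rump_right_quasigroup (alexander_op t) <->
  (forall m : M, one_minus_t t (one_minus_t t m) = 0).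
Proof.
set s := one_minus_t t.
have sD : forall u v, s (u + v) = s u + s v.
  by move=> u v; rewrite /s /one_minus_t raddfD opprD addrACA.
have ts : forall u, t (s u) = s (t u).
  by move=> u; rewrite /s /one_minus_t raddfB.
have op : forall u v, alexander_op t u v = t u + s v by [].
have t0 : t 0 = 0 by rewrite raddf0.
have s0 : s 0 = 0 by rewrite /s /one_minus_t t0 subr0.
split.
  move=> [_ H] m.
  have := H m 0 0; rewrite !op s0 t0 addr0 !add0r ts => E.
  rewrite t0 addr0 add0r in E.
  by apply: (addrI (s (t m))); rewrite E addr0.
move=> h; have h2 : forall m, s (s m) = 0 by exact: h.
split.
  move=> x; case: ht => g tg gt.
  exists (fun w => g (w - s x)) => w /=.
    by rewrite op addrK tg.
  by rewrite op gt subrK.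
move=> x y z.
rewrite !op (sD (t y)) (sD (t x)) !(raddfD t (t z)) !ts !h2 !addr0.
by rewrite addrAC.
Qed.
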